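(* Consider a hyperfractal with $n$ nodes and $d_F>2$, with radio range $R_n=1/\sqrt{n}$. Let $\epsilon>0$ and $H(n)=\left\lceil\frac{\log(n^{1/2-\epsilon}p/2)}{\log(2/q)}\right\rceil$. Then the probability that a street of level $H(n)$ has at least one inter-node gap larger than $R_n$ is at most $n e^{-(q/2)n^{\epsilon}}$.
   Context: Hyperfractal model: the map is the unit square $[0,1]^2$. For $l\ge 0$ let $\mathcal{X}_l=\{(b2^{-(l+1)},y): b=1,3,\dots,2^{l+1}-1,\ y\in[0,1]\}\cup\{(x,b2^{-(l+1)}): b=1,3,\dots,2^{l+1}-1,\ x\in[0,1]\}$; each such segment is a street of level $l$. Fix $p\in(0,1)$, $q=1-p$; $d_F=\log(4/q)/\log 2$. The $n$ mobile nodes form a Poisson point process on $\bigcup_l\mathcal{X}_l$ with total mean $n$ and one-dimensional intensity $\lambda_l=n(p/2)(q/2)^l$ on $\mathcal{X}_l$. An inter-node gap on a street is the distance between a node and the next node along that street. *)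

(* Defs.v *)
From HB Require Import structures.
From mathcomp Require Import all_boot all_order all_algebra.
From mathcomp Require Import all_classical all_reals all_analysis.
Set Implicit Arguments. Unset Strict Implicit. Unset Printing Implicit Defensive.
Import Order.TTheory GRing.Theory Num.Theory.
Local Open Scope classical_set_scope.
Local Open Scope ring_scope.

(* Poisson probability mass function with mean m >= 0:
   P(N = k) = e^{-m} m^k / k!  (with 0^0 = 1, so mean 0 gives the Dirac mass at 0). *)
Definition pois_pmf (R : realType) (m : R) (k : nat) : R :=
  expR (- m) * m ^+ k / k`!%:R.

Definition npts (R : realType) (s : seq R) (A : set R) : nat :=
  count (fun x => `[< A x >]) s.

(* A homogeneous Poisson point process of (one-dimensional) intensity lam on the
   unit segment [0,1] (a street, parametrized by arclength), realized as a random
   finite configuration of points pts : T -> seq R on the probability space P: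
   - all points lie in the segment;
   - for every Borel A included in [0,1], the count N(A) is a random variable
     with Poisson law of mean lam * Leb(A);
   - counts of pairwise disjoint Borel subsets are (mutually) independent. *)
Definition poisson_process_on_unit_segment (R : realType) (d : measure_display)
    (T : measurableType d) (P : probability T R) (lam : R) (pts : T -> seq R) : Prop :=
  [/\ (forall w x, x \in pts w -> 0 <= x <= 1),
      (forall (A : set R) (k : nat), measurable A -> A `<=` `[0, 1]%classic ->
         measurable [set w | npts (pts w) A = k]),
      (forall (A : set R) (k : nat), measurable A -> A `<=` `[0, 1]%classic ->
         P [set w | npts (pts w) A = k] =
         (pois_pmf (lam * fine (lebesgue_measure A)) k)%:E) &
      (forall (m : nat) (A : 'I_m -> set R) (k : 'I_m -> nat),
         (forall i, measurable (A i)) -> (forall i, A i `<=` `[0, 1]%classic) ->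
         (forall i j, i != j -> A i `&` A j = set0) ->
         P (\bigcap_(i in [set: 'I_m]) [set w | npts (pts w) (A i) = k i]) =
         (\prod_(i < m) fine (P [set w | npts (pts w) (A i) = k i]))%:E)].

Definition has_gap_larger (R : realType) (s : seq R) (r : R) : Prop :=
  exists x y, [/\ x \in s, y \in s, x < y, r < y - x &
                  forall z, z \in s -> ~ (x < z < y)].

Definition hf_intensity (R : realType) (n : nat) (p : R) (l : nat) : R :=
  n%:R * (p / 2) * ((1 - p) / 2) ^+ l.

(* Main.v *)
Require Import Defs.
From HB Require Import structures.
From mathcomp Require Import all_boot all_order all_algebra.
From mathcomp Require Import all_classical all_reals all_analysis.
From mathcomp Require Import ring lra.
Import Order.TTheory GRing.Theory Num.Theory.
Local Open Scope classical_set_scope.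
Local Open Scope ring_scope.


Lemma npts_eq0 (R : realType) (s : seq R) (A : set R) :
  (npts s A = 0)%N <-> (forall z, z \in s -> ~ A z).
Proof.
rewrite /npts; split => [H z zs Az | H].
  have : has (fun x => `[< A x >]) s by apply/hasP; exists z => //; apply/asboolP.
  by rewrite has_count H.
apply/eqP; rewrite -leqn0 leqNgt -has_count; apply/negP => /hasP [z zs /asboolP].
exact: H.
Qed.

Lemma max_below (R : realType) (s : seq R) (P : R -> Prop) :
  (exists z, z \in s /\ P z) ->
  exists x, [/\ x \in s, P x & forall z, z \in s -> P z -> z <= x].
Proof.
elim: s => [|a s IH] [z [zin Pz]]; first by rewrite in_nil in zin.
case: (pselect (exists z, z \in s /\ P z)) => [/IH [x [xs Px Hx]]|Hn].
  case: (pselect (P a)) => Pa.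
    case: (leP a x) => hax.
      exists x; split => //; first by rewrite in_cons xs orbT.
      by move=> w; rewrite in_cons => /orP [/eqP -> _ | ws Pw]; [done | exact: Hx].
    exists a; split => //; first by rewrite in_cons eqxx.
    move=> w; rewrite in_cons => /orP [/eqP -> _ | ws Pw]; first by [].
    exact: (le_trans (Hx w ws Pw) (ltW hax)).
  exists x; split => //; first by rewrite in_cons xs orbT.
  by move=> w; rewrite in_cons => /orP [/eqP -> Pw | ws Pw]; [done | exact: Hx].
have za : z = a.
  move: zin; rewrite in_cons => /orP [/eqP //| zs]; exfalso; apply: Hn; by exists z.
exists a; split; first by rewrite in_cons eqxx.
  by rewrite -za.
move=> w; rewrite in_cons => /orP [/eqP -> _ | ws Pw]; first by [].
exfalso; apply: Hn; by exists w.
Qed.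

Lemma min_above (R : realType) (s : seq R) (P : R -> Prop) :
  (exists z, z \in s /\ P z) ->
  exists x, [/\ x \in s, P x & forall z, z \in s -> P z -> x <= z].
Proof.
move=> [z [zs Pz]].
have [x [xs Px Hx]] : exists x, [/\ x \in map -%R s, P (- x) & forall z, z \in map -%R s -> P (- z) -> z <= x].
  apply: (@max_below R (map -%R s) (fun t => P (- t))).
  by exists (- z); split; [exact: map_f | rewrite opprK].
move/mapP: xs => [y ys xy]; subst x.
exists y; split => //; first by rewrite opprK in Px.
move=> w ws Pw; have := Hx (- w) (map_f _ ws); rewrite opprK => /(_ Pw).
by rewrite lerN2.
Qed.



Lemma gap_iff (R: realType) (s : seq R) (r : R) : 0 < r ->
  (forall x, x \in s -> 0 <= x <= 1) ->
  has_gap_larger s r <-> exists M i k : nat,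
   [/\ r < k%:R / M.+1%:R - i%:R / M.+1%:R, (k%:R / M.+1%:R : R) <= 1,
       (exists z, z \in s /\ z < i%:R / M.+1%:R),
       (forall z, z \in s -> ~ (i%:R / M.+1%:R <= z <= k%:R / M.+1%:R)) &
       (exists z, z \in s /\ k%:R / M.+1%:R < z)].
Proof.
move=> r0 s01; split.
  move=> [x [y [xs ys xy rg nz]]].
  have /andP[x0 x1] := s01 x xs; have /andP[y0 y1] := s01 y ys.
  set eta := (y - x - r) / 3.
  have eta0 : 0 < eta by rewrite /eta; lra.
  have ei : 0 < eta^-1 by rewrite invr_gt0.
  have /andP[_ hM] := truncn_itv (ltW ei).
  set M := Num.trunc eta^-1 in hM.
  set D : R := M.+1%:R.
  have D0 : 0 < D by rewrite /D ltr0n.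
  have Deta : 1 < eta * D.
    by rewrite -(ltr_pdivrMl _ _ eta0) mulr1.
  have [xe0 ye0] : 0 <= (x + eta) * D /\ 0 <= (y - eta) * D.
    by split; apply: mulr_ge0; rewrite ?(ltW D0) //; rewrite /eta; lra.
  have /andP[hi1 hi2] := truncn_itv xe0.
  have /andP[hk1 hk2] := truncn_itv ye0.
  set i := Num.trunc ((x + eta) * D) in hi1 hi2.
  set k := Num.trunc ((y - eta) * D) in hk1 hk2.
  exists M, i, k.
  have uD : i%:R / D * D = i%:R by rewrite mulfVK // gt_eqF.
  have vD : k%:R / D * D = k%:R by rewrite mulfVK // gt_eqF.
  rewrite -/D.
  set u := i%:R / D in uD *.
  set v := k%:R / D in vD *.
  rewrite -uD -[i.+1%:R]natr1 -uD in hi1 hi2.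
  rewrite -vD -[k.+1%:R]natr1 -vD in hk1 hk2.
  have hu1 : u <= x + eta by rewrite -(ler_pM2r D0).
  have hu2 : x < u by nra.
  have hv1 : v <= y - eta by rewrite -(ler_pM2r D0).
  have hv2 : y - 2 * eta < v by nra.
  split.
  - rewrite /eta in hu1 hv2 *; lra.
  - rewrite /eta in hv1 *; lra.
  - by exists x.
  - move=> z zs /andP[z1 z2]; apply: (nz z zs); apply/andP; split; lra.
  - exists y; split => //; rewrite /eta in hv1 *; lra.
move=> [M [i [k [h1 h2 [z1 [z1s z1u]] h4 [z2 [z2s z2v]]]]]].
set u := i%:R / M.+1%:R in h1 h4 z1u.
set v := k%:R / M.+1%:R in h1 h2 h4 z2v.
have [x [xs xu Hx]] := @max_below R s (fun t => t < u) (ex_intro _ z1 (conj z1s z1u)).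
have [y [ys yv Hy]] := @min_above R s (fun t => v < t) (ex_intro _ z2 (conj z2s z2v)).
exists x, y; split => //; try lra.
move=> z zs /andP[xz zy].
case: (ltP z u) => zu; first by have := Hx z zs zu; lra.
case: (ltP v z) => zv; first by have := Hy z zs zv; lra.
by apply: (h4 z zs); apply/andP; split.
Qed.


Lemma key_ineq (R : realType) (n : nat) (p eps : R) (l : nat) :
  (0 < n)%N -> 0 < p -> p < 1 -> 0 < eps ->
  l%:Z = Num.ceil (ln (n%:R `^ (2^-1 - eps) * p / 2) / ln (2 / (1 - p))) ->
  (1 - p) / 2 * n%:R `^ eps <= hf_intensity n p l * (Num.sqrt n%:R)^-1.
Proof.
move=> n0 p0 p1 eps0 hl.
set q := 1 - p.
have q0 : 0 < q by rewrite /q; lra.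
have q1 : q < 1 by rewrite /q; lra.
set NR : R := n%:R.
have NR0 : 0 < NR by rewrite /NR ltr0n.
set W := NR `^ (2^-1 - eps).
set E := NR `^ eps.
set S := Num.sqrt NR.
have W0 : 0 < W by apply: powR_gt0.
have E0 : 0 < E by apply: powR_gt0.
have S0 : 0 < S by rewrite sqrtr_gt0.
have WE : W * E = S.
  rewrite /W /E -powRD; last by apply/implyP => _; rewrite gt_eqF.
  by rewrite subrK powR12_sqrt // ltW.
have SS : S * S = NR by rewrite -expr2 sqr_sqrtr // ltW.
have lq : 0 < ln (2 / q).
  by apply: ln_gt0; rewrite ltr_pdivlMr // mul1r; lra.
have hX := ceilB1_lt (ln (W * p / 2) / ln (2 / q)).
rewrite -hl in hX.
rewrite intrB /= ltr_pdivlMr // in hX.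
set A := (2 / q) ^+ l.
have A0 : 0 < A by apply: exprn_gt0; rewrite divr_gt0.
have hA : A < W * p / 2 * (2 / q).
  have q2 : 0 < 2 / q by rewrite divr_gt0.
  have Wp2 : 0 < W * p / 2 by rewrite divr_gt0 // mulr_gt0.
  have WPq : 0 < W * p / 2 * (2 / q) by rewrite mulr_gt0.
  rewrite -ltr_ln ?posrE //.
  rewrite lnM ?posrE //.
  have lA : ln A = l%:R * ln (2/q).
    rewrite /A lnXn //; exact: (esym (mulr_natl _ _)).
  rewrite lA; move: hX; rewrite !pmulrn; lra.
have hA2 : A * q < W * p.
  have e : W * p / 2 * (2 / q) = W * p / q by field; rewrite gt_eqF.
  by rewrite -ltr_pdivlMr // -e.
have -> : hf_intensity n p l = NR * (p / 2) / A.
  by rewrite /hf_intensity /A -/q -[q / 2]invf_div exprVn.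
rewrite ler_pdivlMr // ler_pdivlMr //.
have h : (A * q) * (E * S) <= (W * p) * (E * S) by rewrite ler_pM2r ?mulr_gt0 // ltW.
have e2 : (W * p) * (E * S) / 2 = NR * (p / 2) by rewrite -SS -WE; ring.
rewrite -e2; lra.
Qed.



Lemma expR_le12 (R : realType) (x : R) : 0 <= x -> x <= 2^-1 -> expR x <= 1 + 2 * x.
Proof.
move=> x0 x1.
have h := expR_ge1Dx (- x).
rewrite expRN in h.
have e0 : 0 < expR x := expR_gt0 x.
have h2 : (1 - x) * expR x <= 1.
  by rewrite -(ler_pM2r e0) mulVf ?gt_eqF // in h.
nra.
Qed.

Lemma diff_eq d (T : measurableType d) (R : realType) (mu : {content set T -> \bar R})
  (F1 F2 : set T) (x1 x2 : R) : measurable F1 -> measurable F2 ->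
  mu F1 = x1%:E -> mu F2 = x2%:E -> F2 `<=` F1 -> mu (F1 `\` F2) = (x1 - x2)%:E.
Proof.
move=> m1 m2 e1 e2 s.
rewrite measureD; last by rewrite e1 ltry.
- rewrite e1 (_ : F1 `&` F2 = F2); last by apply/seteqP; split => w /=; [case | move=> h; split => //; exact: s].
  by rewrite e2 -EFinB.
- exact: m1.
- exact: m2.
Qed.

Lemma pois0 (R : realType) (m : R) : pois_pmf m 0 = expR (- m).
Proof. by rewrite /pois_pmf expr0 fact0 mulr1 divr1. Qed.

Theorem lemma6 (R : realType) (d : measure_display) (T : measurableType d)
    (P : probability T R) (n : nat) (p eps : R) (l : nat) (pts : T -> seq R) :
  (0 < n)%N -> 0 < p -> p < 1 ->
  2 < ln (4 / (1 - p)) / ln 2 ->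
  0 < eps ->
  l%:Z = Num.ceil (ln (n%:R `^ (2^-1 - eps) * p / 2) / ln (2 / (1 - p))) ->
  poisson_process_on_unit_segment P (hf_intensity n p l) pts ->
  (P [set w | has_gap_larger (pts w) (Num.sqrt n%:R)^-1]
     <= (n%:R * expR (- ((1 - p) / 2) * n%:R `^ eps))%:E)%E.
Proof.
move=> n0 p0 p1 _ eps0 hl [hs hmeas hpois _].
have key := @key_ineq R n p eps l n0 p0 p1 eps0 hl.
set lam := hf_intensity n p l in key *.
set r := (Num.sqrt n%:R)^-1 in key *.
have NR0 : 0 < n%:R :> R by rewrite ltr0n.
have S0 : 0 < Num.sqrt n%:R :> R by rewrite sqrtr_gt0.
have r0 : 0 < r by rewrite /r invr_gt0.
have lam0 : 0 < lam.
  by rewrite /lam /hf_intensity !mulr_gt0 ?divr_gt0 ?exprn_gt0 ?divr_gt0 //; lra.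
have lamn : 2 * lam <= n%:R.
  rewrite /lam /hf_intensity.
  have h1 : ((1 - p) / 2) ^+ l <= 1 by rewrite exprn_ile1 ?divr_ge0 //; lra.
  have h2 : 0 <= ((1 - p) / 2) ^+ l by rewrite exprn_ge0 // divr_ge0 //; lra.
  set X := ((1 - p) / 2) ^+ l in h1 h2 *.
  have h3 : p * X <= 1 by nra.
  have -> : 2 * (n%:R * (p / 2) * X) = n%:R * (p * X).
    by clearbody X; field.
  clearbody X; nra.
have m0 : forall A : set R, measurable A -> A `<=` `[0, 1]%classic ->
    measurable [set w | npts (pts w) A = 0%N] by move=> A mA sA; exact: hmeas.
have gm : measurable [set w | has_gap_larger (pts w) r].
  pose G (M i k : nat) := [set w | [/\ r < k%:R / M.+1%:R - i%:R / M.+1%:R,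
        (k%:R / M.+1%:R : R) <= 1,
        npts (pts w) `[0, i%:R / M.+1%:R[%classic != 0%N,
        npts (pts w) `[i%:R / M.+1%:R, k%:R / M.+1%:R]%classic = 0%N &
        npts (pts w) `]k%:R / M.+1%:R, 1]%classic != 0%N]].
  have -> : [set w | has_gap_larger (pts w) r] = \bigcup_M \bigcup_i \bigcup_k G M i k.
    apply/seteqP; split => w /=.
      move/(@gap_iff R (pts w) r r0 (hs w)) => [M [i [k [h1 h2 h3 h4 h5]]]].
      exists M => //; exists i => //; exists k => //; split => //.
      - apply/eqP => /npts_eq0 H; case: h3 => z [zs zu]; apply: (H z zs).
        have /andP[z0 _] := hs w z zs.
        by rewrite /= in_itv /= z0 zu.
      - apply/npts_eq0 => z zs; rewrite /= in_itv /= => /andP[a b].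
        by apply: (h4 z zs); rewrite a b.
      - apply/eqP => /npts_eq0 H; case: h5 => z [zs zu]; apply: (H z zs).
        have /andP[_ z1] := hs w z zs.
        by rewrite /= in_itv /= z1 zu.
    move=> [M _ [i _ [k _ [h1 h2 h3 h4 h5]]]].
    apply/(@gap_iff R (pts w) r r0 (hs w)); exists M, i, k; split => //.
    - case: (pselect (exists z, z \in pts w /\ z < i%:R / M.+1%:R)) => // hn.
      exfalso; move/eqP: h3; apply; apply/npts_eq0 => z zs.
      by rewrite /= in_itv /= => /andP[_ hz]; apply: hn; exists z.
    - move=> z zs hz; move/npts_eq0: h4 => /(_ z zs); apply.
      by rewrite /= in_itv /=.
    - case: (pselect (exists z, z \in pts w /\ k%:R / M.+1%:R < z)) => // hn.
      exfalso; move/eqP: h5; apply; apply/npts_eq0 => z zs.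
      by rewrite /= in_itv /= => /andP[hz _]; apply: hn; exists z.
  apply: bigcupT_measurable => M; apply: bigcupT_measurable => i.
  apply: bigcupT_measurable => k.
  rewrite /G.
  set u : R := i%:R / M.+1%:R.
  set v : R := k%:R / M.+1%:R.
  have u0 : 0 <= u by rewrite /u divr_ge0.
  case: (pselect (r < v - u /\ v <= 1)) => [[h1 h2]|hn].
    have -> : [set w | [/\ r < v - u, v <= 1, npts (pts w) `[0, u[%classic != 0%N,
        npts (pts w) `[u, v]%classic = 0%N & npts (pts w) `]v, 1]%classic != 0%N]]
      = ~` [set w | npts (pts w) `[0, u[%classic = 0%N]
        `&` [set w | npts (pts w) `[u, v]%classic = 0%N]
        `&` ~` [set w | npts (pts w) `]v, 1]%classic = 0%N].
      apply/seteqP; split => w /=.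
        by move=> [_ _ /eqP a b /eqP c].
      by move=> [[/eqP a b] /eqP c].
    apply: measurableI; [apply: measurableI|]; [apply: measurableC| |apply: measurableC];
      apply: m0; try exact: measurable_itv;
      by move=> z; rewrite /= !in_itv /= => /andP[za zb]; apply/andP; split; lra.
  have -> : [set w | [/\ r < v - u, v <= 1, npts (pts w) `[0, u[%classic != 0%N,
        npts (pts w) `[u, v]%classic = 0%N & npts (pts w) `]v, 1]%classic != 0%N]]
      = set0.
    by apply/seteqP; split => w // [h1 h2 _ _ _]; exfalso; apply: hn.
  exact: measurable0.
set N := (Num.trunc (2 * lam + Num.sqrt n%:R)).+1.
have hN : 2 * lam + Num.sqrt n%:R < N%:R := truncnS_gt _.
set NR : R := N%:R in hN.
have N0 : 0 < NR by lra.
set dl := NR^-1.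
have dl0 : 0 < dl by rewrite /dl invr_gt0.
have dr : dl < r by rewrite /dl /r ltf_pV2 ?posrE //; lra.
have ld : lam * dl <= 2^-1.
  by rewrite /dl ler_pdivrMr // ler_pdivlMl //; lra.
have ld0 : 0 <= lam * dl by rewrite mulr_ge0 // ltW.
have m01 : forall a b : R, 0 <= a -> b <= 1 ->
    measurable [set w | npts (pts w) `[a, b]%classic = 0%N].
  move=> a b a0 b1; apply: m0; first exact: measurable_itv.
  by move=> z; rewrite /= !in_itv /= => /andP[za zb]; apply/andP; split; lra.
pose E (j : nat) := [set w | [/\ j%:R * dl + r <= 1,
    npts (pts w) `[j.+1%:R * dl, j%:R * dl + r]%classic = 0%N &
    npts (pts w) `[j%:R * dl, j%:R * dl + r]%classic != 0%N]].
have Em : forall j, measurable (E j).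
  move=> j; rewrite /E.
  have a0 : 0 <= j%:R * dl by rewrite mulr_ge0 // ltW.
  have a1 : 0 <= j.+1%:R * dl by rewrite mulr_ge0 // ltW.
  case: (pselect (j%:R * dl + r <= 1)) => [h|hn].
    have -> : [set w | [/\ j%:R * dl + r <= 1,
        npts (pts w) `[j.+1%:R * dl, j%:R * dl + r]%classic = 0%N &
        npts (pts w) `[j%:R * dl, j%:R * dl + r]%classic != 0%N]] =
      [set w | npts (pts w) `[j.+1%:R * dl, j%:R * dl + r]%classic = 0%N] `\`
      [set w | npts (pts w) `[j%:R * dl, j%:R * dl + r]%classic = 0%N].
      apply/seteqP; split => w /=.
        by move=> [_ a /eqP b].
      by move=> [a /eqP b].
    by apply: measurableD; apply: m01.
  have -> : [set w | [/\ j%:R * dl + r <= 1,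
        npts (pts w) `[j.+1%:R * dl, j%:R * dl + r]%classic = 0%N &
        npts (pts w) `[j%:R * dl, j%:R * dl + r]%classic != 0%N]] = set0.
    by apply/seteqP; split => w // [h1 _ _]; exfalso; apply: hn.
  exact: measurable0.
have Eb : forall j, (P (E j) <= (expR (- (lam * r)) * (2 * (lam * dl)))%:E)%E.
  move=> j; rewrite /E.
  set a := j%:R * dl.
  have a0 : 0 <= a by rewrite mulr_ge0 // ltW.
  have -> : j.+1%:R * dl = a + dl by rewrite -natr1 mulrDl mul1r.
  case: (pselect (a + r <= 1)) => [h|hn].
    have -> : [set w | [/\ a + r <= 1,
        npts (pts w) `[a + dl, a + r]%classic = 0%N &
        npts (pts w) `[a, a + r]%classic != 0%N]] =
      [set w | npts (pts w) `[a + dl, a + r]%classic = 0%N] `\`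
      [set w | npts (pts w) `[a, a + r]%classic = 0%N].
      apply/seteqP; split => w /=.
        by move=> [_ a' /eqP b].
      by move=> [a' /eqP b].
    have s1 : `[a + dl, a + r]%classic `<=` `[0, 1]%classic.
      by move=> z; rewrite /= !in_itv /= => /andP[za zb]; apply/andP; split; lra.
    have s2 : `[a, a + r]%classic `<=` `[0, 1]%classic.
      by move=> z; rewrite /= !in_itv /= => /andP[za zb]; apply/andP; split; lra.
    have mi1 : measurable (`[a + dl, a + r]%classic : set R) by exact: measurable_itv.
    have mi2 : measurable (`[a, a + r]%classic : set R) by exact: measurable_itv.
    have H := @diff_eq _ _ _ P _ _ _ _ (m0 _ mi1 s1) (m0 _ mi2 s2)
      (hpois _ 0%N mi1 s1) (hpois _ 0%N mi2 s2).
    have H' := H _.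
    rewrite {}H'; last first.
      move=> w /npts_eq0 H0; apply/npts_eq0 => z zs hz; apply: (H0 z zs).
      by move: hz; rewrite /= !in_itv /= => /andP[za zb]; apply/andP; split; lra.
    rewrite !pois0.
    have L1 : fine (lebesgue_measure (`[a + dl, a + r]%classic : set R)) = r - dl.
      rewrite lebesgue_measure_itv /= lte_fin.
      have -> : a + dl < a + r by lra.
      by rewrite /=; lra.
    have L2 : fine (lebesgue_measure (`[a, a + r]%classic : set R)) = r.
      rewrite lebesgue_measure_itv /= lte_fin.
      have -> : a < a + r by lra.
      by rewrite /=; lra.
    rewrite L1 L2 lee_fin.
    have -> : expR (- (hf_intensity n p l * (r - dl))) = expR (- (lam * r)) * expR (lam * dl).
      by rewrite -expRD /lam; congr expR; ring.
    have := @expR_le12 R _ ld0 ld.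
    have := expR_gt0 (- (lam * r)).
    rewrite -/lam.
    set e1 := expR (- (lam * r)); set e2 := expR (lam * dl).
    nra.
  have -> : [set w | [/\ a + r <= 1,
        npts (pts w) `[a + dl, a + r]%classic = 0%N &
        npts (pts w) `[a, a + r]%classic != 0%N]] = set0.
    by apply/seteqP; split => w // [h1 _ _]; exfalso; apply: hn.
  rewrite (_ : P set0 = 0%E); last exact: measure0.
  rewrite lee_fin mulr_ge0 ?expR_ge0 //.
  by rewrite mulr_ge0.
have cover : [set w | has_gap_larger (pts w) r] `<=` \big[setU/set0]_(j < N) E j.
  move=> w [x [y [xs ys xy rg nz]]].
  rewrite -bigcup_mkord.
  have /andP[x0 x1] := hs w x xs; have /andP[y0 y1] := hs w y ys.
  have xN0 : 0 <= x * NR by rewrite mulr_ge0 // ltW.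
  have /andP[t1 t2] := truncn_itv xN0.
  set j := Num.trunc (x * NR) in t1 t2.
  exists j.
    rewrite /= truncn_lt_nat //.
    rewrite -[X in _ < X]mul1r ltr_pM2r //; lra.
  rewrite /E /=.
  set a := j%:R * dl.
  have jd : j.+1%:R * dl = a + dl by rewrite -natr1 mulrDl mul1r.
  have ax : a <= x by rewrite /a /dl -/(_ / _) ler_pdivrMr.
  have xa : x < a + dl by rewrite -jd /dl -/(_ / _) ltr_pdivlMr.
  rewrite jd; split.
  - lra.
  - apply/npts_eq0 => z zs; rewrite /= in_itv /= => /andP[z1 z2].
    by apply: (nz z zs); apply/andP; split; lra.
  - apply/eqP => /npts_eq0 H; apply: (H x xs).
    by rewrite /= in_itv /=; apply/andP; split; lra.
have sub := @content_subadditive _ _ _ P [set w | has_gap_larger (pts w) r] E N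
  (fun k _ => Em k) gm cover.
apply: (le_trans sub).
apply: (le_trans (lee_sum _ (fun (i : 'I_N) _ => Eb i))).
rewrite sumEFin sumr_const card_ord lee_fin.
have -> : expR (- (lam * r)) * (2 * (lam * dl)) *+ N = 2 * lam * expR (- (lam * r)).
  rewrite -mulr_natr -/NR /dl; field; exact: (lt0r_neq0 N0).
apply: ler_pM.
- by rewrite mulr_ge0 // ltW.
- exact: expR_ge0.
- exact: lamn.
rewrite ler_expR mulNr lerN2; exact: key.
Qed.
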